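(* There exist $b_1,b_2\in L^\infty_{loc}(\mathbb{R})$ such that $S_2(b_1,b_2)<\infty$ and $T_2(b_1,b_2)<\infty$, but $S_{2+\varepsilon}(b_1,b_2)=\infty$ and $T_{2+\varepsilon}(b_1,b_2)=\infty$ for every $\varepsilon>0$.
   Context: For $r>0$, with $\langle g\rangle_I=\frac1{|I|}\int_Ig$ and suprema over all intervals $I\subset\mathbb{R}$: $S_r(b_1,b_2)=\sup_I\big(\frac1{|I|}\int_I|b_1-\langle b_1\rangle_I|^r\big)^{1/r}\big(\frac1{|I|}\int_I|b_2-\langle b_2\rangle_I|^r\big)^{1/r}$ and $T_r(b_1,b_2)=\sup_I\big(\frac1{|I|}\int_I|b_1-\langle b_1\rangle_I|^r|b_2-\langle b_2\rangle_I|^r\big)^{1/r}$. *)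

(* Defs.v *)
From HB Require Import structures.
From mathcomp Require Import all_boot all_order all_algebra.
From mathcomp Require Import all_classical all_reals all_analysis.
Set Implicit Arguments. Unset Strict Implicit. Unset Printing Implicit Defensive.
Import Order.TTheory GRing.Theory Num.Theory.
Local Open Scope classical_set_scope.
Local Open Scope ring_scope.

Section Defs.
Variable R : realType.
Local Notation mu := (@lebesgue_measure R).

Definition Linfty_loc (b : R -> R) : Prop :=
  measurable_fun setT b /\
  forall a c : R, exists M : R,
    {ae mu, forall x, x \in `[a, c] -> `|b x| <= M}.

Definition avg (b : R -> R) (a c : R) : R :=
  (c - a)^-1 * fine (\int[mu]_(x in `[a, c]) (b x)%:E)%E.

Definition mosc (r : R) (b : R -> R) (a c : R) : \bar R :=
  ((((c - a)^-1)%:E * \int[mu]_(x in `[a, c]) ((`|b x - avg b a c| `^ r)%R)%:E) `^ r^-1)%E.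

Definition S_ (r : R) (b1 b2 : R -> R) : \bar R :=
  ereal_sup [set y | exists a c : R, a < c /\ y = (mosc r b1 a c * mosc r b2 a c)%E].

Definition T_ (r : R) (b1 b2 : R -> R) : \bar R :=
  ereal_sup [set y | exists a c : R, a < c /\ y = ((((c - a)^-1)%:E *
      \int[mu]_(x in `[a, c]) (((`|b1 x - avg b1 a c| `^ r) * (`|b2 x - avg b2 a c| `^ r))%R)%:E) `^ r^-1)%E].
End Defs.

(* Main.v *)
Set Warnings "-notation-overridden -ambiguous-paths -notation-incompatible-prefix".
Require Import Defs.
From HB Require Import structures.
From mathcomp Require Import all_boot all_order all_algebra.
From mathcomp Require Import all_classical all_reals all_analysis.
From mathcomp Require Import ring lra measurable_realfun.
Import Order.TTheory GRing.Theory Num.Theory.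
Local Open Scope classical_set_scope.
Local Open Scope ring_scope.

Section Aux.
Context {R : realType}.
Local Notation mu := (@lebesgue_measure R).

Lemma mu_itv {a c : R} : a <= c -> mu `[a, c] = (c - a)%:E.
Proof.
move=> ac; rewrite lebesgue_measure_itv /= lte_fin.
case: ltP => // ca; have -> : c = a by apply/eqP; rewrite eq_le ac ca.
by rewrite subrr.
Qed.

Lemma int_ub {a c K : R} {f : R -> R} : a <= c -> measurable_fun setT f ->
  (forall x, x \in `[a, c] -> 0 <= f x <= K) ->
  exists g, (\int[mu]_(x in `[a, c]) (f x)%:E = g%:E)%E /\ 0 <= g <= K * (c - a).
Proof.
move=> ac mf fb.
have mD : measurable (`[a, c]%classic : set R) by exact: measurable_itv.
have mfD : measurable_fun `[a, c] (fun x : R => (f x)%:E).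
  by apply/measurable_EFinP; exact: measurable_funS mf.
have ge0 : (0 <= \int[mu]_(x in `[a, c]) (f x)%:E)%E.
  by apply: integral_ge0 => x /fb /andP[+ _]; rewrite lee_fin.
have le : (\int[mu]_(x in `[a, c]) (f x)%:E <= (K * (c - a))%:E)%E.
  rewrite EFinM -(mu_itv ac) -integral_cst //.
  apply: ge0_le_integral => //.
  all: try (by move=> x /fb /andP[+ _]; rewrite lee_fin).
  all: try (by move=> x /fb /andP[_ +]; rewrite lee_fin).
have fin : (\int[mu]_(x in `[a, c]) (f x)%:E)%E \is a fin_num.
  by rewrite ge0_fin_numE // (le_lt_trans le) // ltry.
exists (fine (\int[mu]_(x in `[a, c]) (f x)%:E)%E); split; first by rewrite fineK.
by rewrite fine_ge0 //= -lee_fin fineK.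
Qed.

Lemma int_lb {a c p q k : R} {f : R -> R} : a <= p -> p <= q -> q <= c ->
  measurable_fun setT f ->
  (forall x, x \in `[a, c] -> 0 <= f x) ->
  (forall x, x \in `[p, q] -> k <= f x) -> 0 <= k ->
  ((k * (q - p))%:E <= \int[mu]_(x in `[a, c]) (f x)%:E)%E.
Proof.
move=> ap pq qc mf f0 fk k0.
have mD : measurable (`[a, c]%classic : set R) by exact: measurable_itv.
have mA : measurable (`[p, q]%classic : set R) by exact: measurable_itv.
have mfD : measurable_fun `[a, c] (fun x : R => (f x)%:E).
  by apply/measurable_EFinP; exact: measurable_funS mf.
have AD : (`[p, q]%classic : set R) `<=` `[a, c].
  move=> x /=; rewrite !in_itv /= => /andP[px xq].
  by rewrite (le_trans ap px) (le_trans xq qc).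
apply: (@le_trans _ _ (\int[mu]_(x in `[p, q]) (f x)%:E)%E); last first.
  apply: ge0_subset_integral => //.
  all: try by move=> x /f0; rewrite lee_fin.
rewrite EFinM -(mu_itv pq) -integral_cst //.
apply: ge0_le_integral => //.
all: try (by move=> x _; rewrite lee_fin).
all: try (exact: measurable_funS mfD).
all: try (by move=> x /fk; rewrite lee_fin).
Qed.


Lemma mu_itvI01 {a c : R} : a <= c ->
  exists l : R, mu ((`[0%R, 1%R] `&` `[a, c])%classic : set R) = l%:E /\ 0 <= l <= 1 /\ l <= c - a /\
    (0 < l -> exists x : R, 0 <= x <= 1 /\ a <= x <= c).
Proof.
move=> ac.
have m01 : measurable (`[0, 1]%classic : set R) by exact: measurable_itv.
have mD : measurable (`[a, c]%classic : set R) by exact: measurable_itv.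
have le1 : (mu ((`[0%R, 1%R] `&` `[a, c])%classic : set R) <= 1%:E)%E.
  have -> : 1%E = ((1:R) - 0)%:E by rewrite subr0.
  by rewrite -(mu_itv ler01); exact: measureIl.
have leh : (mu ((`[0%R, 1%R] `&` `[a, c])%classic : set R) <= (c - a)%:E)%E.
  by rewrite -(mu_itv ac) setIC; exact: measureIl.
have ge0 : (0 <= mu ((`[0%R, 1%R] `&` `[a, c])%classic : set R))%E by exact: measure_ge0.
have fin : mu ((`[0%R, 1%R] `&` `[a, c])%classic : set R) \is a fin_num.
  by rewrite ge0_fin_numE // (le_lt_trans le1) // ltry.
exists (fine (mu ((`[0%R, 1%R] `&` `[a, c])%classic : set R))); split; first by rewrite fineK.
split; first by rewrite fine_ge0 //= -lee_fin fineK.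
split; first by rewrite -lee_fin fineK.
move=> l0.
have : ((`[0%R, 1%R] `&` `[a, c])%classic : set R) !=set0.
  apply/set0P/negP => /eqP E; move: l0; rewrite E measure0 /=.
  by rewrite ltxx.
case=> x [/= + +]; rewrite !in_itv /= => h1 h2.
by exists x.
Qed.


Definition b1 (x : R) : R := Num.sqrt `|x|.
Definition b2 : R -> R := \1_(`[0%R, 1%R]%classic : set R).

Lemma mb1 : measurable_fun setT b1.
Proof.
apply: measurableT_comp; last exact: normr_measurable.
exact: continuous_measurable_fun (@sqrt_continuous R).
Qed.

Lemma mb2 : measurable_fun setT b2.
Proof. by apply: measurable_indic; exact: measurable_itv. Qed.

Lemma b2E x : b2 x = if 0 <= x <= 1 then 1 else 0.
Proof. by rewrite /b2 indicE mem_setE in_itv /=; case: ifP. Qed.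

Lemma Lb1 : Linfty_loc b1.
Proof.
split; first exact: mb1.
move=> a c; exists (Num.sqrt (`|a| + `|c|)); apply: aeW => x.
rewrite in_itv /= => /andP[ax xc].
rewrite /b1 ger0_norm ?sqrtr_ge0 // ler_sqrt; last by rewrite addr_ge0.
have h1 := ler_norm (- a); rewrite normrN in h1.
have h2 := ler_norm c; have h3 := normr_ge0 a; have h4 := normr_ge0 c.
have [x0|x0] := lerP 0 x.
  by rewrite ger0_norm //; lra.
by rewrite ltr0_norm //; lra.
Qed.

Lemma Lb2 : Linfty_loc b2.
Proof.
split; first exact: mb2.
move=> a c; exists 1; apply: aeW => x _.
by rewrite b2E; case: ifP => _; rewrite ?normr1 ?normr0.
Qed.

Lemma mosc_meas (b : R -> R) (r m : R) : measurable_fun setT b ->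
  measurable_fun setT (fun x => `|b x - m| `^ r).
Proof.
move=> mb.
have h1 : measurable_fun setT (fun x => b x - m).
  exact: (measurable_funB mb (measurable_cst m)).
have h2 : measurable_fun setT (fun x => `|b x - m|).
  exact: (measurableT_comp (@normr_measurable R setT) h1).
exact: (measurableT_comp (measurable_powR r) h2).
Qed.

Lemma avg_bnd (b : R -> R) (a c K : R) : a < c -> measurable_fun setT b ->
  (forall x, x \in `[a, c] -> 0 <= b x <= K) -> 0 <= avg b a c <= K.
Proof.
move=> ac mb bK; rewrite /avg; have [g [-> /andP[g0 gK]]] := int_ub (ltW ac) mb bK.
rewrite /avg /= mulr_ge0 ?invr_ge0 ?subr_ge0 ?(ltW ac) //=.
by rewrite ler_pdivrMl ?subr_gt0 // mulrC.
Qed.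


Lemma int_b2 {a c : R} : a <= c ->
  (\int[mu]_(x in `[a, c]) (b2 x)%:E = mu ((`[0%R, 1%R] `&` `[a, c])%classic : set R))%E.
Proof.
move=> ac; rewrite /b2 integral_indic //; exact: measurable_itv.
Qed.

Lemma b2_01 x : 0 <= b2 x <= 1.
Proof. by rewrite b2E; case: ifP => _; rewrite ?lexx ?ler01. Qed.

Lemma int_b2_ub {a c l be ga : R} {f : R -> R} : a <= c ->
  mu ((`[0%R, 1%R] `&` `[a, c])%classic : set R) = l%:E ->
  0 <= be -> 0 <= ga -> measurable_fun setT f ->
  (forall x, x \in `[a, c] -> 0 <= f x <= be * b2 x + ga) ->
  exists g, (\int[mu]_(x in `[a, c]) (f x)%:E = g%:E)%E /\
     0 <= g <= be * l + ga * (c - a).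
Proof.
move=> ac Hl be0 ga0 mf fb.
have fK : forall x, x \in `[a, c] -> 0 <= f x <= be + ga.
  move=> x /fb /andP[f0 fx]; rewrite f0 /= (le_trans fx) // lerD2r.
  by have /andP[_ h] := b2_01 x; rewrite ler_piMr.
have [g [Hg /andP[g0 _]]] := int_ub ac mf fK.
exists g; split => //; rewrite g0 /= -lee_fin -Hg.
have mD : measurable (`[a, c]%classic : set R) by exact: measurable_itv.
have mb2E : measurable_fun (`[a, c]%classic : set R) (fun x => (b2 x)%:E).
  by apply/measurable_EFinP; exact: measurable_funS mb2.
apply: (@le_trans _ _ (\int[mu]_(x in `[a, c]) (be%:E * (b2 x)%:E + ga%:E))%E).
  apply: ge0_le_integral => //.
  - by move=> x /fb /andP[+ _]; rewrite lee_fin.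
  - by apply/measurable_EFinP; exact: measurable_funS mf.
  - apply: emeasurable_funD; last exact: measurable_cst.
    apply: emeasurable_funM => //; exact: measurable_cst.
  - by move=> x /fb /andP[_ +]; rewrite -EFinM -EFinD lee_fin.
rewrite ge0_integralD //.
- rewrite ge0_integralZl_EFin //; last by move=> x _; rewrite lee_fin; have /andP[] := b2_01 x.
  rewrite int_b2 // Hl integral_cst //.
  have -> : lebesgue_measure_lebesgue_measure__canonical__measure_function_Measure R `[a, c]%classic = (c - a)%:E by exact: mu_itv ac.
  by rewrite -!EFinM -EFinD mulrC.
- by move=> x _; rewrite -EFinM lee_fin mulr_ge0 //; have /andP[] := b2_01 x.
- apply: emeasurable_funM => //; exact: measurable_cst.
Qed.

Lemma avg_b2 {a c l : R} : a < c ->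
  mu ((`[0%R, 1%R] `&` `[a, c])%classic : set R) = l%:E -> avg b2 a c = l / (c - a).
Proof. by move=> ac Hl; rewrite /avg int_b2 ?(ltW ac) // Hl /= mulrC. Qed.


Lemma pow2E (y : R) : `|y| `^ 2 = y ^+ 2.
Proof. by rewrite powR_mulrn // real_normK // num_real. Qed.

Lemma b1_bnd a c x : x \in `[a, c] -> 0 <= b1 x <= Num.sqrt (`|a| + `|c|).
Proof.
rewrite in_itv /= => /andP[ax xc].
rewrite /b1 sqrtr_ge0 /= ler_sqrt; last by rewrite addr_ge0.
have h1 := ler_norm (- a); rewrite normrN in h1.
have h2 := ler_norm c; have h3 := normr_ge0 a; have h4 := normr_ge0 c.
have [x0|x0] := lerP 0 x.
  by rewrite ger0_norm //; lra.
by rewrite ltr0_norm //; lra.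
Qed.

Lemma key_geom {a c l : R} : a < c -> 0 <= l <= 1 -> l <= c - a ->
  (0 < l -> exists x : R, 0 <= x <= 1 /\ a <= x <= c) ->
  (`|a| + `|c|) * l <= (2 + 2 * (c - a)) * l.
Proof.
move=> ac /andP[l0 l1] lh ex.
have [->|lp] := eqVneq l 0; first by rewrite !mulr0.
have lpos : 0 < l by rewrite lt_def lp l0.
have [x [/andP[x0 x1] /andP[ax xc]]] := ex lpos.
rewrite ler_pM2r //.
have ha : `|a| <= 1 + (c - a) by rewrite ler_norml; apply/andP; split; lra.
have hc : `|c| <= 1 + (c - a) by rewrite ler_norml; apply/andP; split; lra.
lra.
Qed.

Lemma S2_bound a c : a < c ->
  (mosc 2 b1 a c * mosc 2 b2 a c <= (8 `^ 2^-1)%:E)%E.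
Proof.
move=> ac; have ac' := ltW ac.
set h := c - a; have h0 : 0 < h by rewrite subr_gt0.
set M1 := `|a| + `|c|.
have M10 : 0 <= M1 by rewrite addr_ge0.
set m1 := avg b1 a c.
have /andP[m10 m1s] : 0 <= m1 <= Num.sqrt M1 by apply: avg_bnd => //; [exact: mb1 | exact: b1_bnd].
have f1b : forall x, x \in `[a, c] -> 0 <= `|b1 x - m1| `^ 2 <= M1.
  move=> x /b1_bnd /andP[bx0 bxs]; rewrite powR_ge0 /= pow2E.
  rewrite -(sqr_sqrtr M10).
  have [y0 ys] : 0 <= Num.sqrt M1 /\ True by split => //; exact: sqrtr_ge0.
  set s := Num.sqrt M1 in bxs m1s y0 *; set u := b1 x in bx0 bxs *.
  nra.
have [g1 [Hg1 /andP[g10 g1b]]] := int_ub ac' (@mosc_meas b1 2 m1 mb1) f1b.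
have [l [Hl [/andP[l0 l1] [lh lex]]]] := mu_itvI01 ac'.
set m2 := avg b2 a c.
have m2E : m2 = l / h by rewrite /m2 (avg_b2 ac Hl).
have m20 : 0 <= m2 by rewrite m2E divr_ge0 // ltW.
have m21 : m2 <= 1 by rewrite m2E ler_pdivrMr // mul1r.
have f2b : forall x, x \in `[a, c] -> 0 <= `|b2 x - m2| `^ 2 <= 1 * b2 x + m2 ^+ 2.
  move=> x _; rewrite powR_ge0 /= pow2E mul1r b2E.
  by case: ifP => _; nra.
have [g2 [Hg2 /andP[g20 g2b]]] :=
  int_b2_ub ac' Hl ler01 (sqr_ge0 m2) (@mosc_meas b2 2 m2 mb2) f2b.
rewrite /mosc -/m1 -/m2 Hg1 Hg2 -!EFinM lee_fin -/h.
have hi : 0 <= h^-1 by rewrite invr_ge0 ltW.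
rewrite -powRM ?mulr_ge0 //.
apply: (@ge0_ler_powR R 2^-1); rewrite ?invr_ge0 ?ler0n // ?nnegrE ?mulr_ge0 ?ler0n //.
set u := l / h.
have uh : u * h = l by rewrite /u divfK // gt_eqF.
have u0 : 0 <= u by rewrite divr_ge0 // ltW.
have u1 : u <= 1 by rewrite ler_pdivrMr // mul1r.
have X1 : h^-1 * g1 <= M1 by rewrite ler_pdivrMl // mulrC.
have X2 : h^-1 * g2 <= u + u ^+ 2.
  have m2u : m2 = u by rewrite m2E.
  rewrite ler_pdivrMl //.
  have -> : h * (u + u ^+ 2) = 1 * l + m2 ^+ 2 * h.
    by rewrite -uh m2u; ring.
  by [].
have kg := key_geom ac (introT andP (conj l0 l1)) lh lex; rewrite -/h -/M1 in kg.
have ku : M1 * u <= 2 * u + 2 * l.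
  rewrite -(ler_pM2r h0).
  have -> : M1 * u * h = M1 * l by rewrite -uh; ring.
  have -> : (2 * u + 2 * l) * h = (2 + 2 * h) * l by rewrite -uh; ring.
  exact: kg.
have p0 : 0 <= h^-1 * g1 by rewrite mulr_ge0.
have q0 : 0 <= h^-1 * g2 by rewrite mulr_ge0.
set p := h^-1 * g1 in X1 p0 *; set q := h^-1 * g2 in X2 q0 *.
have pq : p * q <= M1 * (u + u ^+ 2) by apply: ler_pM.
nra.
Qed.


Lemma T2_bound a c : a < c ->
  ((((c - a)^-1)%:E * \int[mu]_(x in `[a, c])
     (((`|b1 x - avg b1 a c| `^ 2) * (`|b2 x - avg b2 a c| `^ 2))%R)%:E) `^ 2^-1
   <= (8 `^ 2^-1)%:E)%E.
Proof.
move=> ac; have ac' := ltW ac.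
set h := c - a; have h0 : 0 < h by rewrite subr_gt0.
set M1 := `|a| + `|c|.
have M10 : 0 <= M1 by rewrite addr_ge0.
set m1 := avg b1 a c.
have /andP[m10 m1s] : 0 <= m1 <= Num.sqrt M1 by apply: avg_bnd => //; [exact: mb1 | exact: b1_bnd].
have f1b : forall x, x \in `[a, c] -> 0 <= `|b1 x - m1| `^ 2 <= M1.
  move=> x /b1_bnd /andP[bx0 bxs]; rewrite powR_ge0 /= pow2E.
  rewrite -(sqr_sqrtr M10).
  have [y0 ys] : 0 <= Num.sqrt M1 /\ True by split => //; exact: sqrtr_ge0.
  set s := Num.sqrt M1 in bxs m1s y0 *; set u := b1 x in bx0 bxs *.
  nra.
have [l [Hl [/andP[l0 l1] [lh lex]]]] := mu_itvI01 ac'.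
set m2 := avg b2 a c.
have m2E : m2 = l / h by rewrite /m2 (avg_b2 ac Hl).
have m20 : 0 <= m2 by rewrite m2E divr_ge0 // ltW.
have m21 : m2 <= 1 by rewrite m2E ler_pdivrMr // mul1r.
have f2b : forall x, x \in `[a, c] -> 0 <= `|b2 x - m2| `^ 2 <= 1 * b2 x + m2 ^+ 2.
  move=> x _; rewrite powR_ge0 /= pow2E mul1r b2E.
  by case: ifP => _; nra.
have fb : forall x, x \in `[a, c] ->
    0 <= `|b1 x - m1| `^ 2 * `|b2 x - m2| `^ 2 <= M1 * b2 x + M1 * m2 ^+ 2.
  move=> x xI; have /andP[p0 p1] := f1b x xI; have /andP[q0 q1] := f2b x xI.
  rewrite mulr_ge0 //= -mulrDr; rewrite mul1r in q1.
  by apply: ler_pM.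
have mf : measurable_fun setT (fun x => `|b1 x - m1| `^ 2 * `|b2 x - m2| `^ 2).
  exact: (measurable_funM (@mosc_meas b1 2 m1 mb1) (@mosc_meas b2 2 m2 mb2)).
have [g [Hg /andP[g0 gb]]] :=
  int_b2_ub ac' Hl M10 (mulr_ge0 M10 (sqr_ge0 m2)) mf fb.
rewrite -/m1 -/m2 Hg -!EFinM lee_fin -/h.
have hi : 0 <= h^-1 by rewrite invr_ge0 ltW.
apply: (@ge0_ler_powR R 2^-1); rewrite ?invr_ge0 ?ler0n // ?nnegrE ?mulr_ge0 ?ler0n //.
set u := l / h.
have uh : u * h = l by rewrite /u divfK // gt_eqF.
have u0 : 0 <= u by rewrite divr_ge0 // ltW.
have u1 : u <= 1 by rewrite ler_pdivrMr // mul1r.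
have m2u : m2 = u by rewrite m2E.
have X : h^-1 * g <= M1 * (u + u ^+ 2).
  rewrite ler_pdivrMl //.
  have -> : h * (M1 * (u + u ^+ 2)) = M1 * l + M1 * m2 ^+ 2 * h.
    by rewrite -uh m2u; ring.
  by [].
have kg := key_geom ac (introT andP (conj l0 l1)) lh lex; rewrite -/h -/M1 in kg.
have ku : M1 * u <= 2 * u + 2 * l.
  rewrite -(ler_pM2r h0).
  have -> : M1 * u * h = M1 * l by rewrite -uh; ring.
  have -> : (2 * u + 2 * l) * h = (2 + 2 * h) * l by rewrite -uh; ring.
  exact: kg.
nra.
Qed.


Lemma sup_pinfty (S : set (\bar R)) :
  (forall M : R, exists y, S y /\ (M%:E <= y)%E) -> ereal_sup S = +oo%E.
Proof.
move=> HS; case E: (ereal_sup S) => [s| |] //.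
- have [y [Sy My]] := HS (s + 1).
  have := ereal_sup_ubound Sy; rewrite E => ys.
  have := le_trans My ys; rewrite lee_fin => h; exfalso; clear -h; lra.
- have [y [Sy My]] := HS 0.
  have := ereal_sup_ubound Sy; rewrite E leeNy_eq => /eqP yN.
  by move: My; rewrite yN.
Qed.

Lemma phi_unbounded (r C : R) : 2 < r -> 0 < C -> forall M : R, exists u : R,
  1 <= u /\ M <= (u `^ r / (C * u ^+ 2)) `^ r^-1.
Proof.
move=> r2 C0 M.
have r0 : 0 < r by lra.
have e0 : 0 < r - 2 by lra.
pose K := C * (`|M| `^ r) + 1.
have K1 : 1 <= K by rewrite /K lerDr mulr_ge0 ?powR_ge0 // ltW.
have u1 : 1 <= K `^ (r - 2)^-1.
  have := @ler_powR R K K1 0 (r - 2)^-1; rewrite powRr0; apply.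
  by rewrite invr_ge0; exact: ltW e0.
exists (K `^ (r - 2)^-1); split => //.
set u := K `^ (r - 2)^-1 in u1 *.
have u0 : 0 < u by lra.
have ur : u `^ r = u `^ (r - 2) * u ^+ 2.
  rewrite -powR_mulrn; last exact: ltW u0.
  rewrite -powRD; last by rewrite (gt_eqF u0) implybT.
  by congr (_ `^ _); ring.
have uK : u `^ (r - 2) = K by rewrite /u -powRrM mulVf ?gt_eqF // powRr1 // (le_trans ler01).
rewrite ur uK.
have -> : K * u ^+ 2 / (C * u ^+ 2) = K / C.
  by field; rewrite !gt_eqF.
apply: (le_trans (ler_norm M)).
have -> : `|M| = (`|M| `^ r) `^ r^-1 by rewrite -powRrM mulfV ?gt_eqF // powRr1.
apply: (@ge0_ler_powR R r^-1); rewrite ?invr_ge0 ?(ltW r0) // ?nnegrE ?powR_ge0 ?divr_ge0 //.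
- by rewrite (le_trans ler01).
- exact: ltW C0.
- by rewrite ler_pdivlMr // /K mulrC lerDl.
Qed.


Lemma osc_lb {a c p q k r m : R} {f : R -> R} : a <= p -> p <= q -> q <= c ->
  measurable_fun setT f -> 0 <= k -> 0 <= r ->
  (forall x, x \in `[p, q] -> k <= `|f x - m|) ->
  ((k `^ r * (q - p))%:E <= \int[mu]_(x in `[a, c]) (`|f x - m| `^ r)%:E)%E.
Proof.
move=> ap pq qc mf k0 r0 fk.
apply: int_lb => //.
all: try exact: mosc_meas.
all: try (by move=> x _; exact: powR_ge0).
all: try exact: powR_ge0.
move=> x /fk kx; apply: (@ge0_ler_powR R r) => //; rewrite nnegrE //.
Qed.

Lemma osc_fin {a c K r m : R} {f : R -> R} : a <= c -> measurable_fun setT f ->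
  0 <= r -> 0 <= m <= K -> (forall x, x \in `[a, c] -> 0 <= f x <= K) ->
  exists g, (\int[mu]_(x in `[a, c]) (`|f x - m| `^ r)%:E = g%:E)%E /\ 0 <= g.
Proof.
move=> ac mf r0 /andP[m0 mK] fK.
have fb : forall x, x \in `[a, c] -> 0 <= `|f x - m| `^ r <= K `^ r.
  move=> x /fK /andP[fx0 fxK]; rewrite powR_ge0 /=.
  apply: (@ge0_ler_powR R r) => //; rewrite ?nnegrE //; first by rewrite (le_trans m0).
  by rewrite ler_norml; apply/andP; split; lra.
have [g [Hg /andP[g0 _]]] := int_ub ac (@mosc_meas f r m mf) fb.
by exists g.
Qed.

Lemma b1_sq {x : R} : 0 <= x -> 0 <= b1 x /\ b1 x ^+ 2 = x.
Proof. by move=> x0; rewrite /b1 sqrtr_ge0 sqr_sqrtr // ger0_norm. Qed.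

Lemma b1_t (u x : R) : 0 < u -> x \in `[0, 64 * u ^+ 2] -> 0 <= b1 x <= 8 * u.
Proof.
move=> u0; rewrite in_itv /= => /andP[x0 xt].
have [y0 y2] := b1_sq x0.
rewrite y0 /=; set y := b1 x in y0 y2 *.
nra.
Qed.

Lemma S_lb (r u : R) : 2 < r -> 1 <= u ->
  (((u `^ r / (1024 * u ^+ 2)) `^ r^-1)%:E <=
    mosc r b1 0 (64 * u ^+ 2) * mosc r b2 0 (64 * u ^+ 2))%E.
Proof.
move=> r2 u1.
have r0 : 0 <= r by lra.
have u0 : 0 < u by lra.
have t0 : 0 < 64 * u ^+ 2 by rewrite mulr_gt0 // exprn_gt0.
have t64 : 64 <= 64 * u ^+ 2 by rewrite ler_peMr // expr_ge1 // ltW.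
have b1t : forall x, x \in `[0, 64 * u ^+ 2] -> 0 <= b1 x <= 8 * u := fun x => b1_t u x u0.
have /andP[m10 m1K] : 0 <= avg b1 0 (64 * u ^+ 2) <= 8 * u.
  by apply: avg_bnd => //; exact: mb1.
have [g1 [Hg1 g10]] := osc_fin (ltW t0) mb1 r0 (introT andP (conj m10 m1K)) b1t.
have G1 : (2 * u) `^ r * (4 * u ^+ 2) <= g1.
  rewrite -lee_fin -Hg1.
  have [mlo|mhi] := lerP (avg b1 0 (64 * u ^+ 2)) (4 * u).
  - apply: (le_trans _ (osc_lb (p := 36 * u ^+ 2) (q := 64 * u ^+ 2) (k := 2 * u) _ _ _ mb1 _ r0 _)).
    + rewrite lee_fin ler_wpM2l ?powR_ge0 //; lra.
    + by rewrite mulr_ge0 // sqr_ge0.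
    + have := sqr_ge0 u; lra.
    + by [].
    + by rewrite mulr_ge0 // (ltW u0).
    + move=> x; rewrite in_itv /= => /andP[xp xq].
      have x0 : 0 <= x by apply: le_trans xp; rewrite mulr_ge0 // sqr_ge0.
      have [y0 y2] := b1_sq x0.
      apply: (le_trans _ (ler_norm _)); set y := b1 x in y0 y2 *.
      have y6 : 6 * u <= y.
        rewrite -(@ler_pXn2r _ 2) // ?nnegrE ?mulr_ge0 ?(ltW u0) // y2.
        by have -> : (6 * u) ^+ 2 = 36 * u ^+ 2 by ring.
      clear -y6 mlo; lra.
  - apply: (le_trans _ (osc_lb (p := 0) (q := 4 * u ^+ 2) (k := 2 * u) _ _ _ mb1 _ r0 _)).
    + by rewrite subr0.
    + by [].
    + by rewrite mulr_ge0 // sqr_ge0.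
    + have := sqr_ge0 u; lra.
    + by rewrite mulr_ge0 // (ltW u0).
    + move=> x; rewrite in_itv /= => /andP[x0 xq].
      have [y0 y2] := b1_sq x0.
      rewrite distrC; apply: (le_trans _ (ler_norm _)); set y := b1 x in y0 y2 *.
      have y6 : y <= 2 * u.
        rewrite -(@ler_pXn2r _ 2) // ?nnegrE ?mulr_ge0 ?(ltW u0) // y2.
        by have -> : (2 * u) ^+ 2 = 4 * u ^+ 2 by ring.
      clear -y6 mhi; lra.
have /andP[m20 m21] : 0 <= avg b2 0 (64 * u ^+ 2) <= 1.
  by apply: avg_bnd => //; [exact: mb2 | move=> x _; exact: b2_01].
have [g2 [Hg2 g20]] := osc_fin (ltW t0) mb2 r0 (introT andP (conj m20 m21)) (fun x _ => b2_01 x).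
have G2 : 2^-1 `^ r <= g2.
  rewrite -lee_fin -Hg2.
  have [mlo|mhi] := lerP (avg b2 0 (64 * u ^+ 2)) 2^-1.
  - apply: (le_trans _ (osc_lb (p := 0) (q := 1) (k := 2^-1) _ _ _ mb2 _ r0 _)).
    + by rewrite subr0 mulr1.
    + by [].
    + by [].
    + lra.
    + by rewrite invr_ge0.
    + move=> x; rewrite in_itv /= => xI; rewrite b2E xI.
      apply: (le_trans _ (ler_norm _)); lra.
  - apply: (le_trans _ (osc_lb (p := 2) (q := 64 * u ^+ 2) (k := 2^-1) _ _ _ mb2 _ r0 _)).
    + rewrite lee_fin ler_peMr ?powR_ge0 //; lra.
    + by [].
    + lra.
    + by [].
    + by rewrite invr_ge0.
    + move=> x; rewrite in_itv /= => /andP[x2 _].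
      have -> : b2 x = 0 by rewrite b2E; case: ifP => // /andP[_]; lra.
      rewrite sub0r normrN; apply: (le_trans _ (ler_norm _)); lra.
rewrite /mosc Hg1 Hg2 -!EFinM lee_fin subr0.
have ti : 0 <= (64 * u ^+ 2)^-1 by rewrite invr_ge0 (ltW t0).
rewrite -powRM ?mulr_ge0 //.
apply: (@ge0_ler_powR R r^-1).
- by rewrite invr_ge0.
- rewrite nnegrE; apply: divr_ge0; first exact: powR_ge0.
  by apply: mulr_ge0; [exact: ler0n | exact: sqr_ge0].
- by rewrite nnegrE; apply: mulr_ge0; apply: mulr_ge0.
have AB : (2 * u) `^ r * 2^-1 `^ r = u `^ r.
  by rewrite -powRM ?invr_ge0 ?mulr_ge0 // ?(ltW u0) //; congr (_ `^ _); field.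
set A := (2 * u) `^ r in G1 AB; set B := 2^-1 `^ r in G2 AB.
have A0 : 0 <= A by exact: powR_ge0.
have B0 : 0 <= B by exact: powR_ge0.
have e1 : (64 * u ^+ 2)^-1 * (A * (4 * u ^+ 2)) = A / 16.
  by field; rewrite (gt_eqF u0).
have e2 : u `^ r / (1024 * u ^+ 2) = (A / 16) * ((64 * u ^+ 2)^-1 * B).
  by rewrite -AB; field; rewrite (gt_eqF u0).
rewrite e2; apply: ler_pM.
- by rewrite divr_ge0.
- by rewrite mulr_ge0.
- by rewrite -e1; apply: ler_wpM2l.
- by apply: ler_wpM2l.
Qed.

Lemma T_lb (r u : R) : 2 < r -> 1 <= u ->
  (((u `^ r / (1024 * u ^+ 2)) `^ r^-1)%:E <=
   ((((64 * u ^+ 2 - 0)^-1)%R%:E * \int[mu]_(x in `[0%R, (64 * u ^+ 2)%R])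
     (((`|b1 x - avg b1 0 (64 * u ^+ 2)| `^ r) *
       (`|b2 x - avg b2 0 (64 * u ^+ 2)| `^ r))%R)%:E) `^ r^-1))%E.
Proof.
move=> r2 u1.
have r0 : 0 <= r by lra.
have u0 : 0 < u by lra.
have t0 : 0 < 64 * u ^+ 2 by rewrite mulr_gt0 // exprn_gt0.
have u2 : 1 <= u ^+ 2 by rewrite expr_ge1 // (ltW u0).
have b1t : forall x, x \in `[0, 64 * u ^+ 2] -> 0 <= b1 x <= 8 * u := fun x => b1_t u x u0.
have [g [Hg /andP[g0 _]]] := int_ub (ltW t0) mb1 b1t.
have gl : 4 * u * (64 * u ^+ 2 - 16 * u ^+ 2) <= g.
  rewrite -lee_fin -Hg; apply: int_lb.
  - by apply: mulr_ge0; [exact: ler0n | exact: sqr_ge0].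
  - have := sqr_ge0 u; lra.
  - by [].
  - exact: mb1.
  - by move=> x /b1t /andP[].
  - move=> x; rewrite in_itv /= => /andP[xp xq].
    have x0 : 0 <= x by apply: le_trans xp; apply: mulr_ge0; [exact: ler0n | exact: sqr_ge0].
    have [y0 y2] := b1_sq x0; set y := b1 x in y0 y2 *.
    rewrite -(@ler_pXn2r _ 2) // ?nnegrE ?mulr_ge0 ?(ltW u0) // y2.
    by have -> : (4 * u) ^+ 2 = 16 * u ^+ 2 by ring.
  - by apply: mulr_ge0; [exact: ler0n | exact: ltW u0].
set m1 := avg b1 0 (64 * u ^+ 2).
have m13 : 3 * u <= m1.
  rewrite /m1 /avg Hg /= subr0.
  rewrite ler_pdivlMl //.
  have e : 64 * u ^+ 2 * (3 * u) = 4 * u * (64 * u ^+ 2 - 16 * u ^+ 2) by ring.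
  by rewrite e.
have /andP[m10 m18] : 0 <= m1 <= 8 * u by apply: avg_bnd => //; exact: mb1.
have [l [Hl [/andP[l0 l1] [lh _]]]] := mu_itvI01 (ltW t0).
set m2 := avg b2 0 (64 * u ^+ 2).
have m2E : m2 = l / (64 * u ^+ 2 - 0) by rewrite /m2 (avg_b2 t0 Hl).
have m20 : 0 <= m2 by rewrite m2E subr0 divr_ge0 // ltW.
have m2h : m2 <= 2^-1.
  rewrite m2E subr0 ler_pdivrMr //.
  apply: (le_trans l1); have := u2; lra.
have m21 : m2 <= 1 by lra.
have mF : measurable_fun setT (fun x => `|b1 x - m1| `^ r * `|b2 x - m2| `^ r).
  exact: (measurable_funM (mosc_meas b1 r m1 mb1) (mosc_meas b2 r m2 mb2)).
have Fb : forall x, x \in `[0, 64 * u ^+ 2] ->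
    0 <= `|b1 x - m1| `^ r * `|b2 x - m2| `^ r <= (8 * u) `^ r * 1 `^ r.
  move=> x xI; rewrite mulr_ge0 ?powR_ge0 //=.
  have /andP[bx0 bx8] := b1t x xI; have /andP[cx0 cx1] := b2_01 x.
  apply: ler_pM; rewrite ?powR_ge0 //.
  - apply: (@ge0_ler_powR R r) => //; rewrite ?nnegrE //.
    + by apply: mulr_ge0; [exact: ler0n | exact: ltW u0].
    + by rewrite ler_norml; apply/andP; split; lra.
  - apply: (@ge0_ler_powR R r) => //; rewrite ?nnegrE ?ler01 //.
    by rewrite ler_norml; apply/andP; split; lra.
have [G [HG /andP[G0 _]]] := int_ub (ltW t0) mF Fb.
have Gl : u `^ r * (1 - 0) <= G.
  rewrite -lee_fin -HG; apply: int_lb.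
  - exact: lexx.
  - exact: ler01.
  - have := u2; lra.
  - exact: mF.
  - by move=> x /Fb /andP[].
  - move=> x xI; have := xI; rewrite in_itv /= => /andP[x0 x1].
    have [y0 y2] := b1_sq x0.
    have -> : u `^ r = (2 * u) `^ r * 2^-1 `^ r.
      rewrite -powRM; last by rewrite invr_ge0.
        by congr (_ `^ _); field.
      by apply: mulr_ge0; [exact: ler0n | exact: ltW u0].
    apply: ler_pM; rewrite ?powR_ge0 //.
    + apply: (@ge0_ler_powR R r) => //; rewrite ?nnegrE //.
      * by apply: mulr_ge0; [exact: ler0n | exact: ltW u0].
      * rewrite distrC; apply: (le_trans _ (ler_norm _)); set y := b1 x in y0 y2 *.
        have y1 : y <= 1.
          rewrite -(@ler_pXn2r _ 2) // ?nnegrE ?ler01 // y2 expr1n //.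
        lra.
    + apply: (@ge0_ler_powR R r) => //; rewrite ?nnegrE //.
      * rewrite b2E x0 x1 /=; apply: (le_trans _ (ler_norm _)); lra.
  - exact: powR_ge0.
rewrite -/m1 -/m2 HG -EFinM lee_fin.
apply: (@ge0_ler_powR R r^-1).
- by rewrite invr_ge0.
- rewrite nnegrE; apply: divr_ge0; first exact: powR_ge0.
  by apply: mulr_ge0; [exact: ler0n | exact: sqr_ge0].
- by rewrite nnegrE; apply: mulr_ge0 => //; rewrite invr_ge0 subr0 (ltW t0).
rewrite subr0 subr0 mulr1 in Gl *.
have P0 : 0 <= u `^ r by exact: powR_ge0.
apply: (@le_trans _ _ ((64 * u ^+ 2)^-1 * u `^ r)); last first.
  by apply: ler_wpM2l => //; rewrite invr_ge0 (ltW t0).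
have e : (64 * u ^+ 2)^-1 * u `^ r = 16 * (u `^ r / (1024 * u ^+ 2)).
  by field; rewrite (gt_eqF u0).
have X0 : 0 <= u `^ r / (1024 * u ^+ 2).
  apply: divr_ge0; first exact: P0.
  by apply: mulr_ge0; [exact: ler0n | exact: sqr_ge0].
rewrite e; lra.
Qed.

End Aux.

Theorem corollary4p6 (R : realType) :
  exists b1 b2 : R -> R,
    [/\ Linfty_loc b1, Linfty_loc b2,
        (S_ 2 b1 b2 < +oo)%E, (T_ 2 b1 b2 < +oo)%E &
        forall eps : R, 0 < eps ->
          S_ (2 + eps) b1 b2 = +oo%E /\ T_ (2 + eps) b1 b2 = +oo%E].
Proof.
exists (@b1 R), (@b2 R); split.
- exact: Lb1.
- exact: Lb2.
- apply: (@le_lt_trans _ _ (8 `^ 2^-1)%:E); last exact: ltry.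
  apply: ge_ereal_sup => y [a [c [ac ->]]]; exact: S2_bound.
- apply: (@le_lt_trans _ _ (8 `^ 2^-1)%:E); last exact: ltry.
  apply: ge_ereal_sup => y [a [c [ac ->]]]; exact: T2_bound.
move=> eps eps0.
have r2 : 2 < 2 + eps by rewrite ltrDl.
have C0 : (0 : R) < 1024 by rewrite ltr0n.
split; apply: sup_pinfty => M; have [u [u1 HM]] := phi_unbounded _ _ r2 C0 M;
  have u0 : 0 < u by apply: lt_le_trans u1; exact: ltr01.
- eexists; split.
    exists 0, (64 * u ^+ 2); split; last reflexivity.
    by rewrite mulr_gt0 ?exprn_gt0 // ltr0n.
  exact: le_trans (S_lb _ _ r2 u1).
- eexists; split.
    exists 0, (64 * u ^+ 2); split; last reflexivity.
    by rewrite mulr_gt0 ?exprn_gt0 // ltr0n.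
  exact: le_trans (T_lb _ _ r2 u1).
Qed.
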